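(* Let $\sigma$ be one of the two numbers $\sigma_+$ or $\sigma_-$ (at a given point), and put $D=1+F\sigma-G^2\sigma^2$. Then the following conditions are mutually equivalent: (a) $N^2=4MP$ (i.e. $\sigma_+=\sigma_-$, and then $\sigma=\frac{N}{2M}$); (b) $\mathcal{L}_F\mathcal{L}_{GG}=N$ and $\mathcal{L}_F\mathcal{L}_{FG}=PG$; (c) $DM=\mathcal{L}_F^2$, $DN=2\mathcal{L}_F^2\sigma$ and $DP=\mathcal{L}_F^2\sigma^2$; (d) $2D\mathcal{L}_{FF}=\mathcal{L}_F\sigma(1+F\sigma)$, $D\mathcal{L}_{GG}=2\mathcal{L}_F\sigma$ and $D\mathcal{L}_{FG}=\mathcal{L}_F G\sigma^2$.
   Context: Let $F_{ab}$ be an antisymmetric tensor (background electromagnetic field) on an oriented 4-dimensional Lorentzian manifold with metric $g_{ab}$ of signature $(-,+,+,+)$; indices are raised and lowered with $g$, $\varepsilon_{abcd}$ is the volume form and ${}^{*}F_{ab}=\frac12\varepsilon_{abcd}F^{cd}$. Its invariants are $F=\frac12F_{ab}F^{ab}$ and $G=-\frac14F_{ab}\,{}^{*}F^{ab}$. Let $\mathcal{L}(F,G)$ be a smooth Lagrangian; $\mathcal{L}_F,\mathcal{L}_G,\mathcal{L}_{FF},\mathcal{L}_{FG},\mathcal{L}_{GG}$ denote its partial derivatives evaluated at the background invariants. Define $M=\mathcal{L}_F^2+2\mathcal{L}_F\mathcal{L}_{FG}G-\frac12\mathcal{L}_F\mathcal{L}_{GG}F-PG^2$, $N=2\mathcal{L}_F\mathcal{L}_{FF}+\frac12\mathcal{L}_F\mathcal{L}_{GG}-PF$,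 $P=\mathcal{L}_{FF}\mathcal{L}_{GG}-\mathcal{L}_{FG}^2$, and $\sigma_\pm=\frac{N}{2M}\pm\sqrt{\frac{N^2}{4M^2}-\frac{P}{M}}$ (these are real). Standing assumptions: $\mathcal{L}_F\neq0$, $M\neq0$, and $1+\sigma_\pm F-\sigma_\pm^2G^2\neq0$ for both signs. *)

(* Defs.v *)
(* real numbers. All quantities are pointwise scalars:
   F, G are the background invariants, LF, LFF, LFG, LGG the partial
   derivatives of the Lagrangian evaluated at (F, G). *)
From Stdlib Require Import Reals.
Open Scope R_scope.

Definition P_ (LFF LFG LGG : R) : R := LFF * LGG - LFG ^ 2.

Definition M_ (F G LF LFF LFG LGG : R) : R :=
  LF ^ 2 + 2 * LF * LFG * G - (1/2) * LF * LGG * F - P_ LFF LFG LGG * G ^ 2.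

Definition N_ (F G LF LFF LFG LGG : R) : R :=
  2 * LF * LFF + (1/2) * LF * LGG - P_ LFF LFG LGG * F.

Definition disc_ (F G LF LFF LFG LGG : R) : R :=
  N_ F G LF LFF LFG LGG ^ 2 / (4 * M_ F G LF LFF LFG LGG ^ 2)
  - P_ LFF LFG LGG / M_ F G LF LFF LFG LGG.

Definition sigma_plus (F G LF LFF LFG LGG : R) : R :=
  N_ F G LF LFF LFG LGG / (2 * M_ F G LF LFF LFG LGG)
  + sqrt (disc_ F G LF LFF LFG LGG).

Definition sigma_minus (F G LF LFF LFG LGG : R) : R :=
  N_ F G LF LFF LFG LGG / (2 * M_ F G LF LFF LFG LGG)
  - sqrt (disc_ F G LF LFF LFG LGG).

(* Main.v *)
Require Import Defs.
From Stdlib Require Import Reals Lra Psatz.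
Open Scope R_scope.

Section S.
Variables F G a f h g : R.
Local Notation M := (M_ F G a f h g).
Local Notation N := (N_ F G a f h g).
Local Notation P := (P_ f h g).

Lemma key : N ^ 2 - 4 * M * P = (a * g - N) ^ 2 + 4 * (a * h - P * G) ^ 2.
Proof. unfold M_, N_, P_. field. Qed.

Lemma HMe : M = a ^ 2 + 2 * G * (a * h) - F * (a * g) / 2 - P * G ^ 2.
Proof. unfold M_, P_. field. Qed.

Lemma HNe : N = 2 * (a * f) + (a * g) / 2 - P * F.
Proof. unfold N_, P_. field. Qed.

Lemma ab : N ^ 2 = 4 * M * P <-> (a * g = N /\ a * h = P * G).
Proof.
  pose proof key as K. split.
  - intro H. assert (E : (a * g - N) ^ 2 + 4 * (a * h - P * G) ^ 2 = 0) by lra.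
    set (u := a * g - N) in E. set (v := a * h - P * G) in E.
    assert (Hu : u = 0) by nra. assert (Hv : v = 0) by nra.
    unfold u, v in *. split; lra.
  - intros [H1 H2]. rewrite H1, H2 in K. lra.
Qed.

Lemma sig_eq (s : R) : M <> 0 -> N ^ 2 = 4 * M * P ->
  (s = sigma_plus F G a f h g \/ s = sigma_minus F G a f h g) -> s = N / (2 * M).
Proof.
  intros HM Ha Hs.
  assert (Hd : disc_ F G a f h g = 0).
  { unfold disc_. rewrite Ha. field. auto. }
  unfold sigma_plus, sigma_minus in Hs. rewrite Hd, sqrt_0 in Hs.
  destruct Hs; lra.
Qed.

Lemma a_c (s : R) : M <> 0 -> N ^ 2 = 4 * M * P -> s = N / (2 * M) ->
  let D := 1 + F * s - G ^ 2 * s ^ 2 in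
  D * M = a ^ 2 /\ D * N = 2 * a ^ 2 * s /\ D * P = a ^ 2 * s ^ 2.
Proof.
  intros HM Ha Hs D.
  destruct (proj1 ab Ha) as [H1 H2].
  pose proof HMe as E. rewrite H1, H2 in E.
  assert (Q : N ^ 2 / (4 * M) = P) by (rewrite Ha; field; auto).
  assert (DM : D * M = a ^ 2).
  { unfold D. rewrite Hs.
    replace ((1 + F * (N / (2 * M)) - G ^ 2 * (N / (2 * M)) ^ 2) * M)
      with (M + F * N / 2 - G ^ 2 * (N ^ 2 / (4 * M))) by (field; auto).
    rewrite Q. nra. }
  split; [exact DM|split].
  - replace (D * N) with (D * M * (N / M)) by (field; auto).
    rewrite DM, Hs. field. auto.
  - replace (D * P) with (D * M * (P / M)) by (field; auto).
    rewrite DM, Hs, <- Q. field. auto.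
Qed.

Lemma c_a (s : R) : 1 + F * s - G ^ 2 * s ^ 2 <> 0 ->
  let D := 1 + F * s - G ^ 2 * s ^ 2 in
  D * M = a ^ 2 /\ D * N = 2 * a ^ 2 * s /\ D * P = a ^ 2 * s ^ 2 ->
  N ^ 2 = 4 * M * P.
Proof.
  intros HD D [C1 [C2 C3]].
  assert (Z : D ^ 2 * (N ^ 2 - 4 * M * P) = 0).
  { replace (D ^ 2 * (N ^ 2 - 4 * M * P)) with ((D * N) ^ 2 - 4 * (D * M) * (D * P)) by ring.
    rewrite C1, C2, C3. ring. }
  apply Rmult_integral in Z. destruct Z as [Z|Z].
  - exfalso. apply HD. fold D. nra.
  - lra.
Qed.

Lemma bc_d (s : R) : a <> 0 ->
  let D := 1 + F * s - G ^ 2 * s ^ 2 in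
  a * g = N -> a * h = P * G ->
  D * M = a ^ 2 /\ D * N = 2 * a ^ 2 * s /\ D * P = a ^ 2 * s ^ 2 ->
  2 * D * f = a * s * (1 + F * s) /\ D * g = 2 * a * s /\ D * h = a * G * s ^ 2.
Proof.
  intros Ha D H1 H2 [C1 [C2 C3]].
  pose proof HNe as E.
  split; [|split]; apply (Rmult_eq_reg_l a); auto.
  - replace (a * (2 * D * f)) with (D * (2 * (a * f))) by ring.
    replace (2 * (a * f)) with (N - a * g / 2 + P * F) by lra.
    rewrite H1.
    replace (D * (N - N / 2 + P * F)) with ((D * N) / 2 + (D * P) * F) by field.
    rewrite C2, C3. field.
  - replace (a * (D * g)) with (D * (a * g)) by ring. rewrite H1, C2. ring.
  - replace (a * (D * h)) with (D * (a * h)) by ring. rewrite H2.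
    replace (D * (P * G)) with ((D * P) * G) by ring. rewrite C3. ring.
Qed.

Lemma d_b (s : R) : 1 + F * s - G ^ 2 * s ^ 2 <> 0 ->
  let D := 1 + F * s - G ^ 2 * s ^ 2 in
  2 * D * f = a * s * (1 + F * s) /\ D * g = 2 * a * s /\ D * h = a * G * s ^ 2 ->
  a * g = N /\ a * h = P * G.
Proof.
  intros HD D [D1 [D2 D3]].
  assert (HD' : D <> 0) by exact HD.
  assert (Ef : f = a * s * (1 + F * s) / (2 * D)).
  { apply (Rmult_eq_reg_l (2 * D)); [rewrite D1; field; auto| lra]. }
  assert (Eg : g = 2 * a * s / D).
  { apply (Rmult_eq_reg_l D); [rewrite D2; field; auto| auto]. }
  assert (Eh : h = a * G * s ^ 2 / D).
  { apply (Rmult_eq_reg_l D); [rewrite D3; field; auto| auto]. }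
  unfold N_, P_. rewrite Ef, Eg, Eh. unfold D in *.
  split; field; auto.
  all: intro Hx; apply HD; rewrite <- Hx; ring.
Qed.
End S.

Theorem proposition1 (F G LF LFF LFG LGG : R)
  (hdisc : 0 <= disc_ F G LF LFF LFG LGG)
  (hLF : LF <> 0)
  (hM : M_ F G LF LFF LFG LGG <> 0)
  (hDp : 1 + sigma_plus F G LF LFF LFG LGG * F
           - sigma_plus F G LF LFF LFG LGG ^ 2 * G ^ 2 <> 0)
  (hDm : 1 + sigma_minus F G LF LFF LFG LGG * F
           - sigma_minus F G LF LFF LFG LGG ^ 2 * G ^ 2 <> 0)
  (sigma : R)
  (hsigma : sigma = sigma_plus F G LF LFF LFG LGG
            \/ sigma = sigma_minus F G LF LFF LFG LGG) :
  let M := M_ F G LF LFF LFG LGG in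
  let N := N_ F G LF LFF LFG LGG in
  let P := P_ LFF LFG LGG in
  let D := 1 + F * sigma - G ^ 2 * sigma ^ 2 in
  let cond_a := N ^ 2 = 4 * M * P in
  let cond_b := LF * LGG = N /\ LF * LFG = P * G in
  let cond_c := D * M = LF ^ 2 /\ D * N = 2 * LF ^ 2 * sigma
                /\ D * P = LF ^ 2 * sigma ^ 2 in
  let cond_d := 2 * D * LFF = LF * sigma * (1 + F * sigma)
                /\ D * LGG = 2 * LF * sigma
                /\ D * LFG = LF * G * sigma ^ 2 in
  (cond_a <-> cond_b) /\ (cond_a <-> cond_c) /\ (cond_a <-> cond_d).
Proof.
  intros M N P D ca cb cc cd.
  assert (HD : 1 + F * sigma - G ^ 2 * sigma ^ 2 <> 0).
  { destruct hsigma as [Hs|Hs]; rewrite Hs; intro Hx;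
    [apply hDp | apply hDm]; rewrite <- Hx; ring. }
  assert (AB := ab F G LF LFF LFG LGG).
  assert (AC : ca -> cc).
  { intro Ha. apply (a_c F G LF LFF LFG LGG sigma hM Ha).
    exact (sig_eq F G LF LFF LFG LGG sigma hM Ha hsigma). }
  split; [exact AB|split; split].
  - exact AC.
  - exact (c_a F G LF LFF LFG LGG sigma HD).
  - intro Ha. destruct (proj1 AB Ha) as [H1 H2].
    exact (bc_d F G LF LFF LFG LGG sigma hLF H1 H2 (AC Ha)).
  - intro Hd. apply (proj2 AB). exact (d_b F G LF LFF LFG LGG sigma HD Hd).
Qed.
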